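(* Let $X$ be a normal topological space in which every $\Lambda$-set is open, and let $g,f:X\to\mathbb{R}$ be functions such that $f$ is lower semi-contra-continuous, $g$ is upper semi-contra-continuous, and $f\le g$. Then there exists a contra-continuous function $h:X\to\mathbb{R}$ such that $f\le h\le g$.
   Context: A $\Lambda$-set in $X$ is an intersection of open sets. A function $f:X\to\mathbb{R}$ is upper semi-contra-continuous (resp. lower semi-contra-continuous) if $f^{-1}(-\infty,t)$ (resp. $f^{-1}(t,+\infty)$) is closed in $X$ for every real $t$. A function $h:X\to\mathbb{R}$ is contra-continuous if the preimage of every open subset of $\mathbb{R}$ is closed in $X$. $f\le g$ means $f(x)\le g(x)$ for all $x\in X$. *)

(* Defs.v *)
From HB Require Import structures.
From mathcomp Require Import all_boot all_order all_algebra.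
From mathcomp Require Import all_classical all_reals all_analysis.
Set Implicit Arguments. Unset Strict Implicit. Unset Printing Implicit Defensive.
Import Order.TTheory GRing.Theory Num.Theory.
Import numFieldNormedType.Exports.
Local Open Scope classical_set_scope.
Local Open Scope ring_scope.

Definition lambda_set {X : topologicalType} (A : set X) : Prop :=
  exists F : set (set X), (forall U, F U -> open U) /\ A = \bigcap_(U in F) U.

Definition upper_semi_contra_continuous {X : topologicalType} {R : realType}
  (f : X -> R) : Prop := forall t : R, closed (f @^-1` [set y | y < t]).

Definition lower_semi_contra_continuous {X : topologicalType} {R : realType}
  (f : X -> R) : Prop := forall t : R, closed (f @^-1` [set y | t < y]).

Definition contra_continuous {X : topologicalType} {R : realType}
  (h : X -> R) : Prop := forall V : set R, open V -> closed (h @^-1` V).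

(* Main.v *)
Require Import Defs.
From HB Require Import structures.
From mathcomp Require Import all_boot all_order all_algebra.
From mathcomp Require Import all_classical all_reals all_analysis.
Import Order.TTheory GRing.Theory Num.Theory.
Import numFieldNormedType.Exports.
Local Open Scope classical_set_scope.
Local Open Scope ring_scope.

Theorem corollary2 (R : realType) (X : topologicalType)
  (hnormal : normal_space X)
  (hlambda : forall A : set X, lambda_set A -> open A)
  (g f : X -> R)
  (hf : lower_semi_contra_continuous f)
  (hg : upper_semi_contra_continuous g)
  (hfg : forall x, f x <= g x) :
  exists h : X -> R, contra_continuous h /\ (forall x, f x <= h x /\ h x <= g x).
Proof.
pose N (y : X) := [set x | forall U : set X, open U -> U y -> U x].
have Nopen : forall y, open (N y).
  move=> y; apply: hlambda; exists [set U | open U /\ U y]; split.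
    by move=> U [].
  apply/seteqP; split => x /=.
    by move=> Hx U [oU Uy]; exact: Hx.
  by move=> Hx U oU Uy; exact: (Hx U (conj oU Uy)).
have Nrefl : forall y, N y y by move=> y U.
have Ntrans : forall x y z, N x y -> N y z -> N x z.
  by move=> x y z Hxy Hyz U oU Ux; apply: Hyz => //; exact: Hxy.
have fN : forall a d, N d a -> f a <= f d.
  move=> a d Hda; rewrite leNgt; apply/negP => lt.
  have oU : open (~` (f @^-1` [set y | f d < y])) by rewrite openC; exact: hf.
  by apply: (Hda _ oU) => //=; rewrite ltxx.
have gN : forall a d, N d a -> g d <= g a.
  move=> a d Hda; rewrite leNgt; apply/negP => lt.
  have oU : open (~` (g @^-1` [set y | y < g d])) by rewrite openC; exact: hg.
  by apply: (Hda _ oU) => //=; rewrite ltxx.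
have cl1 : forall a d, closure [set a] d -> N d a.
  move=> a d Hd U oU Ud.
  have [x [-> Ux]] := Hd U (open_nbhs_nbhs (conj oU Ud)); exact: Ux.
have norm : forall a b c, N a c -> N b c -> exists d, N d a /\ N d b.
  move=> a b c Hac Hbc.
  apply: contrapT => Hno.
  have sub : closure [set a] `<=` ~` closure [set b].
    move=> d Hda Hdb; apply: Hno; exists d; split; exact: cl1.
  have Hn : set_nbhs (closure [set a]) (~` closure [set b]).
    apply/set_nbhsP; exists (~` closure [set b]); split => //.
    by rewrite openC; exact: closed_closure.
  have [B HB HBs] := hnormal _ (@closed_closure _ [set a]) _ Hn.
  have [U [oU sU UB]] := (set_nbhsP _ _).1 HB.
  have Uc : U c by apply: Hac => //; apply: sU; exact: subset_closure.
  have cB : closure B c by apply: subset_closure; exact: UB.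
  have ob : open (~` closure B) by rewrite openC; exact: closed_closure.
  have nb : (~` closure B) b.
    move=> bB; exact: (HBs b bB (subset_closure (erefl b))).
  exact: (Hbc _ ob nb cB).
pose L a b := exists d, N d a /\ N d b.
have Lsym : forall a b, L a b -> L b a by move=> a b [d [H1 H2]]; exists d.
have Ltrans : forall a b c, L a b -> L b c -> L a c.
  move=> a b c [d [Hda Hdb]] [e [Heb Hec]].
  have [k [Hkd Hke]] := norm d e b Hdb Heb.
  exists k; split; [exact: Ntrans Hkd Hda | exact: Ntrans Hke Hec].
have Lfg : forall a b, L a b -> f b <= g a.
  move=> a b [d [Hda Hdb]].
  apply: (le_trans (fN _ _ Hdb)); apply: (le_trans (hfg d)); exact: gN.
pose E a := [set r | exists2 b, L a b & r = f b].
have Ene : forall a, E a !=set0.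
  by move=> a; exists (f a); exists a => //; exists a; split; exact: Nrefl.
have Eub : forall a, ubound (E a) (g a).
  by move=> a r [b Hab ->]; exact: Lfg.
pose h a := sup (E a).
have hE : forall a b, L a b -> h a = h b.
  move=> a b Hab; rewrite /h; congr sup; apply/seteqP; split => r [c Hc ->].
    by exists c => //; apply: Ltrans (Lsym _ _ Hab) Hc.
  by exists c => //; apply: Ltrans Hab Hc.
exists h; split.
  move=> V _; rewrite -openC.
  have -> : ~` (h @^-1` V) = \bigcup_(y in ~` (h @^-1` V)) N y.
    apply/seteqP; split => x.
      by move=> Hx; exists x => //; exact: Nrefl.
    move=> [y Hy Hyx] /=; rewrite -(hE y x) //; exists y; split => //; exact: Nrefl.
  by apply: bigcup_open => y _; exact: Nopen.
move=> x; split.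
  apply: ub_le_sup; first by exists (g x); exact: Eub.
  by exists x => //; exists x; split; exact: Nrefl.
by apply: ge_sup; [exact: Ene | exact: Eub].
Qed.
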